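(* Fix an integer $k\ge1$ and $p\in(0,1)$. Let $T_{k+1}$ be the number of $k$-simplices of $X(n,p)$ that are critical for the lexicographical matching. Then there exist a constant $C_{p,k}>0$ and an integer $N_{p,k}$, both independent of $n$, such that for all $n\ge N_{p,k}$, \[ \mathrm{Var}(T_{k+1})\ge C_{p,k}\,n^{2k}. \]
   Context: $G(n,p)$ is the random graph on $[n]$ where each of the $\binom n2$ edges is present independently with probability $p$; write $Y_{i,j}=Y_{j,i}$ for the edge indicator of $\{i,j\}$. $X(n,p)$ is the clique complex of $G\sim G(n,p)$: its simplices are the nonempty vertex sets spanning cliques in $G$; a $k$-simplex has $k+1$ vertices. Lexicographical matching on a simplicial complex $\mathcal{L}$: for $s\in\mathcal{L}$ let $I_{\mathcal{L}}(s)=\{j: j<\min(s),\ s\cup\{j\}\in\mathcal{L}\}$; whenever nonempty, pair $s$ with $s\cup\{\min I_{\mathcal{L}}(s)\}$. A simplex is critical if it is in no pair. Explicitly, with $C_{k+1}$ the set of $(k+1)$-subsets of $[n]$ and $s_-=s\setminus\{\min s\}$, \[ T_{k+1}=\sum_{s\in C_{k+1}}\prod_{i\ne j\in s}Y_{i,j}\Bigl[\prod_{i=1}^{\min(s)-1}\Bigl(1-\prod_{j\in s}Y_{i,j}\Bigr)-\prod_{i=1}^{\min(s)-1}\Bigl(1-\prod_{j\in s_-}Y_{i,j}\Bigr)\Bigr]. \] *)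

(* Defs.v *)
From mathcomp Require Import all_boot all_order all_algebra.
From mathcomp Require Import reals.
Set Implicit Arguments. Unset Strict Implicit. Unset Printing Implicit Defensive.
Import Order.TTheory GRing.Theory Num.Theory.

(* Vertex set [n] is 'I_n (0-based; the order is the same as on {1..n}).
   A graph on [n] is a set of 2-subsets of 'I_n. *)
Definition edges (n : nat) : {set {set 'I_n}} := [set e : {set 'I_n} | #|e| == 2].

Definition is_graph (n : nat) (G : {set {set 'I_n}}) : bool := G \subset edges n.

(* simplices of the clique complex X(G): nonempty vertex sets spanning cliques *)
Definition clique (n : nat) (G : {set {set 'I_n}}) (s : {set 'I_n}) : bool :=
  (s != set0) && [forall i in s, forall j in s, (i != j) ==> ([set i; j] \in G)].

(* min(s) as a natural number (s nonempty in all uses) *)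
Definition smin (n : nat) (s : {set 'I_n}) : nat := \big[minn/n]_(i in s) val i.

Definition Iset (n : nat) (G : {set {set 'I_n}}) (s : {set 'I_n}) : {set 'I_n} :=
  [set j | (val j < smin s)%N && clique G (j |: s)].

(* s is paired (as the larger simplex) with some t: s = t ∪ {min I_L(t)} *)
Definition matched_down (n : nat) (G : {set {set 'I_n}}) (s : {set 'I_n}) : bool :=
  [exists t : {set 'I_n}, exists j : 'I_n,
     [&& clique G t, j \in Iset G t,
         [forall j' in Iset G t, (val j <= val j')%N] & s == j |: t]].

(* critical simplex of the lexicographical matching: in L and in no pair *)
Definition critical (n : nat) (G : {set {set 'I_n}}) (s : {set 'I_n}) : bool :=
  [&& clique G s, Iset G s == set0 & ~~ matched_down G s].

Definition Tcrit (n k : nat) (G : {set {set 'I_n}}) : nat :=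
  #|[set s : {set 'I_n} | (#|s| == k.+1) && critical G s]|.

Local Open Scope ring_scope.

Definition gnp_weight (R : realType) (n : nat) (p : R) (G : {set {set 'I_n}}) : R :=
  \prod_(e in edges n) (if e \in G then p else 1 - p).

Definition gnp_E (R : realType) (n : nat) (p : R) (f : {set {set 'I_n}} -> R) : R :=
  \sum_(G : {set {set 'I_n}} | is_graph G) gnp_weight p G * f G.

Definition gnp_Var (R : realType) (n : nat) (p : R) (f : {set {set 'I_n}} -> R) : R :=
  gnp_E p (fun G => (f G - gnp_E p f) ^+ 2).

(* Main.v *)
Require Import Defs.
From mathcomp Require Import all_boot all_order all_algebra.
From mathcomp Require Import reals.
From mathcomp Require Import zify ring lra.
Set Implicit Arguments. Unset Strict Implicit. Unset Printing Implicit Defensive.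

Section Comb.
Variables (n k : nat).
Local Notation N := n.+2.
Implicit Types (G : {set {set 'I_N}}) (s t u : {set 'I_N}) (i j a b : 'I_N).
Definition v0 : 'I_N := ord0.
Definition v1 : 'I_N := @Ordinal N 1 isT.
Definition e0 : {set 'I_N} := [set v0; v1].
Definition Sedges (s : {set 'I_N}) : {set {set 'I_N}} :=
  [set e : {set 'I_N} | [&& #|e| == 2, e \subset v0 |: s & e != e0]].
Definition Cand : {set {set 'I_N}} :=
  [set s : {set 'I_N} | [&& #|s| == k.+1, v1 \in s & v0 \notin s]].
Definition SA (G : {set {set 'I_N}}) := [set s in Cand | Sedges s \subset G].

Lemma v01 : v0 != v1. Proof. by []. Qed.

Lemma smin_le (s : {set 'I_N}) i : i \in s -> (smin s <= val i)%N.
Proof.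
move=> Hi; rewrite /smin -big_filter.
have : i \in [seq j <- index_enum 'I_N | j \in s] by rewrite mem_filter Hi mem_index_enum.
elim: [seq j <- _ | _] => // a l IH; rewrite inE big_cons => /orP [/eqP -> | /IH H].
- exact: geq_minl.
- exact: leq_trans (geq_minr _ _) H.
Qed.

Lemma smin_gt (s : {set 'I_N}) x : (x < N)%N -> (forall i, i \in s -> x < val i)%N ->
  (x < smin s)%N.
Proof.
move=> HxN H; rewrite /smin; apply: (big_ind (fun m => x < m)%N) => //.
- by move=> a b Ha Hb; rewrite leq_min Ha Hb.
Qed.

Lemma v0_val (i : 'I_N) : i != v0 -> (0 < val i)%N.
Proof. by case: i => [[|i] Hi] //=. Qed.

Lemma val_le1 (i : 'I_N) : (val i <= 1)%N -> i = v0 \/ i = v1.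
Proof. by case: i => [[|[|i]] Hi] //= _; [left|right]; apply: val_inj. Qed.

Lemma clique_edge G s a b : clique G s -> a \in s -> b \in s -> a != b ->
  [set a; b] \in G.
Proof.
case/andP=> _ /forallP H Ha Hb Hab.
by move: (H a); rewrite Ha /= => /forallP /(_ b); rewrite Hb Hab.
Qed.

Lemma cliqueI G s : s != set0 -> (forall a b, a \in s -> b \in s -> a != b ->
  [set a; b] \in G) -> clique G s.
Proof.
move=> Hs H; rewrite /clique Hs /=; apply/forallP => a; apply/implyP => Ha.
apply/forallP => b; apply/implyP => Hb; apply/implyP; exact: H.
Qed.

Lemma clique_sub G s t : clique G s -> t \subset s -> t != set0 -> clique G t.
Proof.
move=> Hc Hts Ht; apply: cliqueI => // a b Ha Hb; apply: (clique_edge Hc);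
  exact: (subsetP Hts).
Qed.

Lemma clique_mono G G' s : G \subset G' -> clique G s -> clique G' s.
Proof.
move=> HG Hc; apply: cliqueI; first by case/andP: Hc.
move=> a b Ha Hb Hab; apply: (subsetP HG); exact: (clique_edge Hc).
Qed.

Lemma clique_drop G s : clique (e0 |: G) s -> ~~ (e0 \subset s) -> clique G s.
Proof.
move=> Hc He; apply: cliqueI; first by case/andP: Hc.
move=> a b Ha Hb Hab; move: (clique_edge Hc Ha Hb Hab); rewrite in_setU1.
case/orP => // /eqP Hab0; case/negP: He; rewrite -Hab0.
by apply/subsetP => x; rewrite !inE => /orP [] /eqP ->.
Qed.

Lemma e0_sub u : e0 \subset u = (v0 \in u) && (v1 \in u).
Proof.
apply/idP/idP.
- by move/subsetP => H; rewrite !H // !inE eqxx ?orbT.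
- by case/andP => H0 H1; apply/subsetP => x; rewrite !inE => /orP [] /eqP ->.
Qed.

Lemma Iset_mono G G' s : G \subset G' -> Iset G s \subset Iset G' s.
Proof.
move=> HG; apply/subsetP => j; rewrite !inE => /andP [-> Hc] /=.
exact: clique_mono Hc.
Qed.

Lemma matched_v0 G s : v0 \in s -> (1 < #|s|)%N -> clique G s -> matched_down G s.
Proof.
move=> H0 Hs Hc; apply/existsP; exists (s :\ v0); apply/existsP; exists v0.
have Ht : s :\ v0 != set0.
  by rewrite -card_gt0; move: Hs; rewrite (cardsD1 v0) H0.
apply/and4P; split.
- exact: clique_sub Hc (subD1set _ _) Ht.
- rewrite inE setD1K // Hc andbT; apply: smin_gt => // i.
  by rewrite in_setD1 => /andP [Hi _]; exact: v0_val.
- by apply/forallP => j; apply/implyP.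
- by rewrite setD1K.
Qed.

Lemma Sedges_pair G s a b : Sedges s \subset G -> a \in v0 |: s -> b \in v0 |: s ->
  a != b -> [set a; b] != e0 -> [set a; b] \in G.
Proof.
move=> HS Ha Hb Hab Hne; apply: (subsetP HS); rewrite inE cards2 Hab Hne andbT /=.
by apply/subsetP => x; rewrite in_set2 => /orP [] /eqP ->.
Qed.

Lemma clique_sub_vs G s u : Sedges s \subset G -> u \subset v0 |: s -> u != set0 ->
  ~~ (e0 \subset u) -> clique G u.
Proof.
move=> HS Hu Hu0 He; apply: cliqueI => // a b Ha Hb Hab.
apply: (Sedges_pair HS) => //; try exact: (subsetP Hu).
apply: (contraNneq _ He) => E; rewrite -E.
by apply/subsetP => x; rewrite in_set2 => /orP [] /eqP ->.
Qed.

Lemma SA_crit G s : s \in SA G -> e0 \notin G -> critical G s.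
Proof.
rewrite !inE => /andP [/and3P [Hk H1 H0] HS] HG.
have Hs0 : s != set0 by apply/set0Pn; exists v1.
have Hc : clique G s.
  apply: clique_sub_vs HS (subsetU1 _ _) Hs0 _.
  by rewrite e0_sub (negbTE H0).
rewrite /critical Hc /=; apply/andP; split.
- apply/eqP/setP => j; rewrite inE in_set0; apply/negP => /andP [Hj Hcj].
  have := leq_trans Hj (smin_le H1) => /= Hj1.
  have Hj0 : j = v0 by apply: val_inj => /=; move: Hj1; case: (val j).
  subst j; have := clique_edge Hcj (setU11 _ _) _ v01.
  rewrite in_setU1 H1 orbT => /(_ isT) He.
  by case/negP: HG.
- apply/negP => /existsP [t /existsP [j /and4P [Hct Hj /forallP Hmin /eqP Hs]]].
  move: (Hj); rewrite inE => /andP [Hjt _].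
  have Ht0 : t \subset s by rewrite Hs subsetU1.
  have Hv1t : v1 \notin t.
    apply/negP => Ht1; have := leq_trans Hjt (smin_le Ht1) => /= Hj1.
    have Hj0 : j = v0 by apply: val_inj => /=; move: Hj1; case: (val j).
    by move: H0; rewrite Hs Hj0 setU11.
  have Hj1 : j = v1.
    by move: H1; rewrite Hs in_setU1 (negbTE Hv1t) orbF => /eqP.
  have Hv0 : v0 \in Iset G t.
    rewrite inE; apply/andP; split.
    + apply: smin_gt => // i Hi; apply: v0_val.
      by apply: contraNneq H0 => <-; exact: (subsetP Ht0).
    + apply: clique_sub_vs HS _ _ _.
      * exact: setUS.
      * by apply/set0Pn; exists v0; exact: setU11.
      * by rewrite e0_sub negb_and orbC in_setU1 (negbTE Hv1t).
  by move: (Hmin v0); rewrite Hv0 Hj1.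
Qed.

Lemma SA_ncrit1 G s : s \in SA G -> ~~ critical (e0 |: G) s.
Proof.
rewrite !inE => /andP [/and3P [Hk H1 H0] HS].
apply/negP => /and3P [_ /eqP HI _].
have : v0 \in Iset (e0 |: G) s; last by rewrite HI in_set0.
rewrite inE; apply/andP; split.
- apply: smin_gt => // i Hi; apply: v0_val.
  by apply: contraNneq H0 => <-.
- apply: cliqueI; first by apply/set0Pn; exists v0; exact: setU11.
  move=> a b Ha Hb Hab; rewrite in_setU1.
  case: (eqVneq [set a; b] e0) => [->|Hne]; first by [].
by rewrite /=; apply: (Sedges_pair HS).
Qed.

Lemma crit1_crit G s : v0 \notin s -> critical (e0 |: G) s -> critical G s.
Proof.
move=> H0 /and3P [Hc /eqP HI Hmd].
have He : ~~ (e0 \subset s) by rewrite e0_sub (negbTE H0).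
have HcG := clique_drop Hc He.
rewrite /critical HcG /=; apply/andP; split.
- by rewrite -subset0 -HI; apply: Iset_mono; exact: subsetU1.
- apply: contra Hmd => /existsP [t /existsP [j /and4P [Hct Hj /forallP Hmin /eqP Hs]]].
  apply/existsP; exists t; apply/existsP; exists j; apply/and4P; split.
  + exact: clique_mono (subsetU1 _ _) Hct.
  + exact: (subsetP (Iset_mono t (subsetU1 e0 G))).
  + apply/forallP => j'; apply/implyP => Hj'; rewrite leqNgt; apply/negP => Hlt.
    have Ht0 : t \subset s by rewrite Hs subsetU1.
    move: (Hj); rewrite inE => /andP [Hjt _].
    have Hin : j' \in Iset G t.
      move: Hj'; rewrite !inE => /andP [Hj't Hcj']; rewrite Hj't /=.
      apply: clique_drop Hcj' _; rewrite e0_sub; apply/negP => /andP [A0 A1].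
      case/setU1P: A1 => [E1|A1].
      * move: A0; rewrite -E1 in_setU1 => /orP [] //.
        by move=> A0; case/negP: H0; exact: (subsetP Ht0).
      * have := leq_trans Hjt (smin_le A1) => /= Hle.
        have : (val j' < 0)%N by apply: leq_trans Hlt _; rewrite -ltnS; exact: Hle.
        by [].
    by move: (Hmin j'); rewrite Hin /= leqNgt Hlt.
  + by rewrite Hs.
Qed.

Lemma Tcrit_step G : (1 <= k)%N -> e0 \notin G ->
  (Tcrit k (e0 |: G) + #|SA G| <= Tcrit k G)%N.
Proof.
move=> Hk HG; rewrite /Tcrit.
have Hdisj : [set s : {set 'I_N} | (#|s| == k.+1) && critical (e0 |: G) s] :&: SA G = set0.
  apply/eqP; rewrite -subset0; apply/subsetP => s; rewrite inE => /andP [Hs1 Hs2].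
  by move: Hs1; rewrite inE (negbTE (SA_ncrit1 Hs2)) andbF.
rewrite -[X in (X <= _)%N]subn0 -(cards0 ({set 'I_N})) -Hdisj -cardsU.
apply: subset_leq_card; apply/subsetP => s; rewrite in_setU => /orP [].
- rewrite inE => /andP [Hk1 Hcr]; rewrite inE Hk1 /=.
  case: (boolP (v0 \in s)) => H0; last exact: crit1_crit.
  move: Hcr => /and3P [Hc _ Hmd]; case/negP: Hmd; apply: matched_v0 => //.
  by rewrite (eqP Hk1) ltnS.
- move=> Hs; rewrite inE (SA_crit Hs HG) andbT.
  by move: Hs; rewrite !inE => /andP [/and3P [-> _ _] _].
Qed.

Lemma card_Sedges s : s \in Cand -> (#|Sedges s| <= 2 ^ k.+2)%N.
Proof.
rewrite inE => /and3P [/eqP Hk _ H0].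
have Hsub : Sedges s \subset powerset (v0 |: s).
  by apply/subsetP => e; rewrite powersetE inE => /and3P [_ He _].
apply: leq_trans (subset_leq_card Hsub) _.
by rewrite card_powerset cardsU1 H0 Hk.
Qed.

Lemma Sedges_sub s : Sedges s \subset edges N :\ e0.
Proof. by apply/subsetP => e; rewrite !inE => /and3P [-> _ ->]. Qed.

Lemma SA_sum G : #|SA G| = (\sum_(s in Cand) (Sedges s \subset G))%N.
Proof.
rewrite -sum1_card (eq_bigl (fun s => (s \in Cand) && (Sedges s \subset G))); last first.
  by move=> s; rewrite inE.
rewrite big_mkcond [RHS]big_mkcond /=; apply: eq_bigr => s _.
by case: (s \in Cand); case: (Sedges s \subset G).
Qed.

Lemma Cand_card : ('C(n, k) <= #|Cand|)%N.
Proof.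
have HB : #|~: e0| = n.
  by have := cardsC e0; rewrite cards2 card_ord => /eqP; rewrite eqSS => /eqP [].
have -> : 'C(n, k) = 'C(#|~: e0|, k) by rewrite HB.
rewrite -cards_draws.
set D := [set A : {set 'I_N} | A \subset ~: e0 & #|A| == k].
have Hinj : {in D &, injective (fun t => v1 |: t)}.
  move=> t1 t2; rewrite !inE => /andP [H1 _] /andP [H2 _] E.
  have N1 : v1 \notin t1 by apply/negP => /(subsetP H1); rewrite !inE eqxx orbT.
  have N2 : v1 \notin t2 by apply/negP => /(subsetP H2); rewrite !inE eqxx orbT.
  by rewrite -(setU1K N1) -(setU1K N2) E.
rewrite -(card_in_imset Hinj); apply: subset_leq_card; apply/subsetP => s.
case/imsetP => t; rewrite inE => /andP [Ht /eqP Hk] ->.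
have N1 : v1 \notin t by apply/negP => /(subsetP Ht); rewrite !inE eqxx orbT.
have N0 : v0 \notin t by apply/negP => /(subsetP Ht); rewrite !inE eqxx.
by rewrite inE cardsU1 N1 Hk setU11 in_setU1 N0 add1n eqxx.
Qed.

End Comb.


Import Order.TTheory GRing.Theory Num.Theory.
Local Open Scope ring_scope.

Section Prob.
Variables (R : realType) (T : finType) (p : R).
Implicit Types (D G S : {set T}).

Lemma sum_split D (e : T) (F : {set T} -> R) : e \in D ->
  \sum_(G : {set T} | G \subset D) F G = \sum_(G : {set T} | G \subset D :\ e) (F G + F (e |: G)).
Proof.
move=> He; rewrite (bigID (fun G => e \in G)) /= addrC big_split /=; congr (_ + _).
- by apply: eq_bigl => G; rewrite subsetD1.
- rewrite (reindex_onto (fun G => e |: G) (fun G => G :\ e)) /=; last first.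
    by move=> G /andP [_ HeG]; exact: setD1K.
  apply: eq_bigl => G; rewrite setU11 andbT subsetD1; apply/idP/idP.
  + case/andP => H1 /eqP H2.
    have He' : e \notin G by rewrite -H2 setD11.
    by rewrite He' andbT; apply: subset_trans (subsetU1 _ _) H1.
  + case/andP => H1 H2; rewrite setU1K // eqxx andbT.
    by apply/subsetP => x; rewrite in_setU1 => /orP [/eqP ->|/(subsetP H1)].
Qed.

Lemma prod_split D e (h : T -> bool -> R) G : e \in D -> G \subset D :\ e ->
  \prod_(x in D) h x (x \in G) = h e false * \prod_(x in D :\ e) h x (x \in G) /\
  \prod_(x in D) h x (x \in e |: G) = h e true * \prod_(x in D :\ e) h x (x \in G).
Proof.
move=> He HG; have HeG : e \notin G by move: HG; rewrite subsetD1 => /andP [].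
rewrite !(bigD1 e He) /= (negbTE HeG) setU11; split; congr (_ * _).
- by apply: eq_bigl => x; rewrite in_setD1 andbC.
- apply: eq_big => [x|x]; first by rewrite in_setD1 andbC.
  by move=> /andP [_ Hx]; rewrite in_setU1 (negbTE Hx).
Qed.

Lemma prod_sum D (h : T -> bool -> R) :
  \sum_(G : {set T} | G \subset D) \prod_(x in D) h x (x \in G) = \prod_(x in D) (h x true + h x false).
Proof.
move: {2}#|D| (erefl #|D|) => m; elim: m D => [|m IH] D HD.
- have -> : D = set0 by apply/eqP; rewrite -cards_eq0 HD.
  rewrite (eq_bigl (fun G => G == set0)); last by move=> G; rewrite subset0.
  by rewrite big_pred1_eq !big_set0.
- have [e He] : exists e, e \in D by apply/set0Pn; rewrite -card_gt0 HD.
  rewrite (sum_split _ He).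
  rewrite (eq_bigr (fun G => (h e true + h e false) * \prod_(x in D :\ e) h x (x \in G))); last first.
    move=> G HG; rewrite (proj1 (prod_split h He HG)) (proj2 (prod_split h He HG)).
    by rewrite addrC -mulrDl.
  rewrite -mulr_sumr IH; last by move: HD; rewrite (cardsD1 e) He => -[].
  rewrite [RHS](bigD1 e He) /=; congr (_ * _).
  by apply: eq_bigl => x; rewrite in_setD1 andbC.
Qed.

Definition wt D G : R := \prod_(x in D) (if x \in G then p else 1 - p).

Hypotheses (Hp0 : 0 <= p) (Hp1 : p <= 1).

Lemma wt_ge0 D G : 0 <= wt D G.
Proof. apply: prodr_ge0 => x _; case: ifP => _ //; rewrite subr_ge0 //. Qed.

Lemma wt_sum D : \sum_(G : {set T} | G \subset D) wt D G = 1.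
Proof.
rewrite /wt (prod_sum D (fun x b => if b then p else 1 - p)).
by apply: big1 => x _; rewrite addrC subrK.
Qed.

Lemma wt_ind D S : S \subset D ->
  \sum_(G : {set T} | G \subset D) wt D G * (S \subset G)%:R = p ^+ #|S|.
Proof.
move=> HSD.
transitivity (\sum_(G : {set T} | G \subset D) \prod_(x in D)
    ((if x \in G then p else 1 - p) * (if x \in S then (x \in G)%:R else 1))).
  apply: eq_bigr => G _; rewrite big_split /=; congr (_ * _).
  case: (boolP (S \subset G)) => HSG.
  - by rewrite big1 // => x _; case: ifP => // xS; rewrite (subsetP HSG).
  - have [x xS xG] : exists2 x, x \in S & x \notin G by apply/subsetPn.
    by rewrite (bigD1 x) ?(subsetP HSD) //= xS (negbTE xG) mul0r.
rewrite (prod_sum D (fun x b => (if b then p else 1 - p) * (if x \in S then b%:R else 1))).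
transitivity (\prod_(x in D) (if x \in S then p else 1)).
  apply: eq_bigr => x _; case: ifP => _ /=; rewrite ?mulr1 ?mulr0 ?addr0 //.
  by rewrite addrC subrK.
rewrite -big_mkcondr /= (eq_bigl (mem S)) ?prodr_const //.
move=> x /=; rewrite andbC; case: (boolP (x \in S)) => // xS.
by rewrite (subsetP HSD _ xS).
Qed.

Lemma jensen D (A : {set T} -> R) :
  (\sum_(G : {set T} | G \subset D) wt D G * A G) ^+ 2 <= \sum_(G : {set T} | G \subset D) wt D G * A G ^+ 2.
Proof.
have E : forall m, \sum_(G : {set T} | G \subset D) wt D G * (A G - m) ^+ 2 =
   \sum_(G : {set T} | G \subset D) wt D G * A G ^+ 2 - 2 * m * \sum_(G : {set T} | G \subset D) wt D G * A G
   + m ^+ 2.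
  move=> m.
  transitivity (\sum_(G : {set T} | G \subset D) (wt D G * A G ^+ 2 + (- (2 * m)) * (wt D G * A G)
     + m ^+ 2 * wt D G)).
    by apply: eq_bigr => G _; ring.
  rewrite !big_split /= -!mulr_sumr wt_sum; ring.
have E2 := E (\sum_(G : {set T} | G \subset D) wt D G * A G).
have : 0 <= \sum_(G : {set T} | G \subset D) wt D G * (A G - \sum_(G : {set T} | G \subset D) wt D G * A G) ^+ 2.
  by apply: sumr_ge0 => G _; apply: mulr_ge0; [exact: wt_ge0|exact: sqr_ge0].
rewrite E2; nra.
Qed.

Lemma pair_sum D e (F : {set T} -> R) : e \in D ->
  \sum_(G : {set T} | G \subset D) wt D G * F G =
  \sum_(G : {set T} | G \subset D :\ e) wt (D :\ e) G * ((1 - p) * F G + p * F (e |: G)).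
Proof.
move=> He; rewrite (sum_split _ He); apply: eq_bigr => G HG.
rewrite /wt (proj1 (prod_split (fun x b => if b then p else 1 - p) He HG)).
rewrite (proj2 (prod_split (fun x b => if b then p else 1 - p) He HG)) /=; ring.
Qed.

End Prob.


Lemma leqXn (m n e : nat) : (m <= n)%N -> (m ^ e <= n ^ e)%N.
Proof. by case: e => [|e] // H; rewrite leq_exp2r. Qed.

Lemma nat_bound (n k : nat) : (2 * k + 2 <= n)%N ->
  (n.+2 ^ k <= 2 ^ k * k`! * 'C(n, k))%N.
Proof.
move=> Hn.
have ff : forall m j, ((m - j) ^ j <= m ^_ j)%N.
  move=> m j; elim: j m => [|j IH] m //; rewrite ffactnS expnS.
  apply: leq_mul; first exact: leq_subr.
  apply: leq_trans (IH m.-1); apply: leqXn; lia.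
rewrite -mulnA (mulnC (k`!)) bin_ffact.
apply: (@leq_trans ((2 * (n - k)) ^ k)); first by apply: leqXn; lia.
by rewrite expnMn leq_mul2l ff orbT.
Qed.

Theorem lemma4p4 (R : realType) (k : nat) (p : R) :
  (1 <= k)%N -> 0 < p -> p < 1 ->
  exists C : R, exists N : nat, 0 < C /\
    forall n : nat, (N <= n)%N ->
      C * (n%:R) ^+ (2 * k) <= gnp_Var p (fun G : {set {set 'I_n}} => (Tcrit k G)%:R).
Proof.
move=> Hk Hp0 Hp1.
set M := (2 ^ k.+2)%N; set K := (2 ^ k * k`!)%N.
have HK : (0 < K)%N by rewrite muln_gt0 expn_gt0 fact_gt0.
have HKR : 0 < K%:R :> R by rewrite ltr0n.
exists (p * (1 - p) * p ^+ (2 * M) / (K%:R) ^+ 2), (2 * k + 4)%N; split.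
  apply: divr_gt0; last exact: exprn_gt0.
  by apply: mulr_gt0; [apply: mulr_gt0; lra|exact: exprn_gt0].
case => [|[|n]] Hn; try lia.
set N := n.+2.
have Hn' : (2 * k + 2 <= n)%N by lia.
have Hp0' : 0 <= p by lra.
have Hp1' : p <= 1 by lra.
have Hc0 : 0 <= p * (1 - p) by apply: mulr_ge0; lra.
have He0 : e0 n \in edges N by rewrite inE cards2.
set f := fun G : {set {set 'I_N}} => (Tcrit k G)%:R : R.
set mu := gnp_E p f.
have -> : gnp_Var p f = \sum_(G : {set {set 'I_N}} | G \subset edges N)
    wt p (edges N) G * (f G - mu) ^+ 2 by [].
rewrite (pair_sum _ _ He0).
set E' := edges N :\ e0 n.
set A := fun G : {set {set 'I_N}} => (#|SA k G|)%:R : R.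
apply: (@le_trans _ _ (\sum_(G : {set {set 'I_N}} | G \subset E') wt p E' G * (p * (1 - p) * A G ^+ 2))); last first.
  apply: ler_sum => G HG; apply: ler_wpM2l; first exact: wt_ge0.
  have HeG : e0 n \notin G by move: HG; rewrite subsetD1 => /andP [].
  have Hst := Tcrit_step Hk HeG.
  have HA : A G + f (e0 n |: G) <= f G by rewrite /A /f -natrD ler_nat addnC.
  have HA0 : 0 <= A G by rewrite ler0n.
  move: HA HA0; rewrite -/(f G); move: (A G) (f G) (f (e0 n |: G)) => a x y Ha Ha0.
  have h1 : a ^+ 2 <= (x - y) ^+ 2 by nra.
  have h2 : 0 <= ((1 - p) * (x - mu) + p * (y - mu)) ^+ 2 := sqr_ge0 _.
  have h3 : p * (1 - p) * a ^+ 2 <= p * (1 - p) * (x - y) ^+ 2 by apply: ler_wpM2l.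
  have -> : (1 - p) * (x - mu) ^+ 2 + p * (y - mu) ^+ 2 =
     ((1 - p) * (x - mu) + p * (y - mu)) ^+ 2 + p * (1 - p) * (x - y) ^+ 2 by ring.
  lra.
rewrite (eq_bigr (fun G => p * (1 - p) * (wt p E' G * A G ^+ 2))); last first.
  by move=> G _; ring.
rewrite -mulr_sumr.
set S := \sum_(G : {set {set 'I_N}} | G \subset E') wt p E' G * A G.
apply: (@le_trans _ _ (p * (1 - p) * S ^+ 2)); last by apply: ler_wpM2l => //; exact: jensen.
have HL : #|Cand n k|%:R * p ^+ M <= S.
  have -> : S = \sum_(s in Cand n k) p ^+ #|Sedges s|.
    rewrite /S /A (eq_bigr (fun G => \sum_(s in Cand n k) wt p E' G * (Sedges s \subset G)%:R)); last first.
      by move=> G _; rewrite SA_sum natr_sum mulr_sumr.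
    rewrite exchange_big /=; apply: eq_bigr => s _; exact: wt_ind (Sedges_sub s).
  have -> : #|Cand n k|%:R * p ^+ M = \sum_(s in Cand n k) p ^+ M by rewrite sumr_const mulr_natl.
  apply: ler_sum => s Hs.
  apply: ler_wiXn2l; [exact: Hp0'|exact: Hp1'|].
  exact: card_Sedges Hs.
have Hc : (N%:R ^+ k <= K%:R * #|Cand n k|%:R :> R).
  rewrite -natrX -natrM ler_nat; apply: leq_trans (nat_bound Hn') _.
  by rewrite leq_mul2l Cand_card orbT.
set a := N%:R ^+ k * p ^+ M / K%:R.
have Ha : p * (1 - p) * p ^+ (2 * M) / K%:R ^+ 2 * N%:R ^+ (2 * k) = p * (1 - p) * a ^+ 2.
  rewrite /a (mulnC 2 M) (mulnC 2 k) !exprM; field.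
  by rewrite lt0r_neq0.
rewrite Ha; apply: ler_wpM2l => //.
have HpM : 0 <= p ^+ M by exact: exprn_ge0.
have Ha0 : 0 <= a by rewrite /a; apply: divr_ge0; [apply: mulr_ge0 => //; exact: exprn_ge0|exact: ltW].
have HaL : a <= #|Cand n k|%:R * p ^+ M.
  rewrite /a ler_pdivrMr //; nra.
nra.
Qed.
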